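(* Let $X$ be a convex metric space over a Boolean ring $B$, $0\in X$, and $R=\{x_{1},\ldots,x_{n}\}$ a referential of $(X,0)$. Let $Y$ be a convex metric space over $B$ and $0'\in Y$. A map $f:R\to Y$ extends to a contractive map $\hat{f}:X\to Y$ with $\hat f(0)=0'$ if and only if $d(0',f(x_{i}))\le d(0,x_{i})$ for $i=1,\ldots,n$; moreover such an extension is unique.
   Context: $B$ is a Boolean ring ($a\vee b=a+b+ab$, $a\le b\iff ab=a$; $a_1\oplus\cdots\oplus a_n$ denotes a sum of pairwise disjoint elements). A Boolean metric space over $B$: set $X$ with $d:X\times X\to B$, $d(x,y)=0\iff x=y$, symmetric, $d(x,z)\le d(x,y)\vee d(y,z)$. For $x_1,\dots,x_n\in X$, $a_i\in B$ with $a_1\oplus\cdots\oplus a_n=1$, $x$ is a convex combination of the $x_i$ with coefficients $a_i$ if $a_id(x,x_i)=0$ for all $i$; $X$ is convex if all such combinations exist. A map is contractive if $d(f(x),f(y))\le d(x,y)$. In $(X,0)$: $|x|=d(0,x)$; $x\perp y$ iff $d(x,y)=|x|\vee|y|$; a finite $R\subseteq X$ is orthogonal if $0\notin R$ and distinct elements are orthogonal; a referential of $(X,0)$ is an orthogonal $R$ such that every element of $X$ is a convex combination of elements of $R\cup\{0\}$. *)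

(* Defs.v *)
From HB Require Import structures.
From mathcomp Require Import all_boot all_order all_algebra.
Set Implicit Arguments. Unset Strict Implicit. Unset Printing Implicit Defensive.
Import GRing.Theory.
Local Open Scope ring_scope.

Definition boolean_ring (B : comPzRingType) : Prop := forall a : B, a * a = a.

Definition bjoin (B : comPzRingType) (a b : B) : B := a + b + a * b.
Definition ble (B : comPzRingType) (a b : B) : Prop := a * b = a.

Definition bmetric (B : comPzRingType) (X : Type) (d : X -> X -> B) : Prop :=
  [/\ (forall x y, d x y = 0 <-> x = y),
      (forall x y, d x y = d y x) &
      (forall x y z, ble (d x z) (bjoin (d x y) (d y z)))].

Definition bpartition (B : comPzRingType) (n : nat) (a : 'I_n -> B) : Prop :=
  (forall i j, i != j -> a i * a j = 0) /\ \sum_(i < n) a i = 1.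

Definition convex_comb (B : comPzRingType) (X : Type) (d : X -> X -> B)
  (n : nat) (xs : 'I_n -> X) (a : 'I_n -> B) (x : X) : Prop :=
  forall i, a i * d x (xs i) = 0.

Definition bconvex (B : comPzRingType) (X : Type) (d : X -> X -> B) : Prop :=
  forall (n : nat) (xs : 'I_n -> X) (a : 'I_n -> B),
    bpartition a -> exists x, convex_comb d xs a x.

Definition contractive (B : comPzRingType) (X Y : Type)
  (d : X -> X -> B) (d' : Y -> Y -> B) (f : X -> Y) : Prop :=
  forall x y, ble (d' (f x) (f y)) (d x y).

Definition bnorm (B : comPzRingType) (X : Type) (d : X -> X -> B) (o x : X) : B :=
  d o x.
Definition borth (B : comPzRingType) (X : Type) (d : X -> X -> B) (o x y : X) : Prop :=
  d x y = bjoin (bnorm d o x) (bnorm d o y).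

Definition referential (B : comPzRingType) (X : Type) (d : X -> X -> B) (o : X)
  (n : nat) (xs : 'I_n -> X) : Prop :=
  [/\ injective xs,
      (forall i, xs i <> o),
      (forall i j, i != j -> borth d o (xs i) (xs j)) &
      (forall x : X, exists (m : nat) (ys : 'I_m -> X) (a : 'I_m -> B),
          [/\ forall k, ys k = o \/ exists i, ys k = xs i,
              bpartition a &
              convex_comb d ys a x])].

(* Main.v *)
Require Import Defs.
From mathcomp Require Import all_boot all_order all_algebra.
From Stdlib Require Import Classical ClassicalEpsilon.
Set Implicit Arguments. Unset Strict Implicit.
Import GRing.Theory.
Local Open Scope ring_scope.

Lemma addxx (B : comPzRingType) (HB : boolean_ring B) (a : B) : a + a = 0.
Proof.
have := HB (a + a); rewrite mulrDl !mulrDr !HB => H.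
by apply: (@addrI _ (a + a)); rewrite addr0.
Qed.

Lemma ble_iff (B : comPzRingType) (HB : boolean_ring B) (s a b : B) :
  ble s (bjoin a b) <-> s * (1 + a) * (1 + b) = 0.
Proof.
have E : (1 + a) * (1 + b) = 1 + bjoin a b.
  by rewrite /bjoin mulrDl !mulrDr !mul1r mulr1 !addrA (addrAC 1 b a).
rewrite -mulrA E mulrDr mulr1 /ble; split => H.
  by rewrite H addxx.
have : s * bjoin a b = - s by apply/eqP; rewrite -addr_eq0 addrC H.
by move=> ->; apply/eqP; rewrite eq_sym -addr_eq0 addxx.
Qed.

Lemma comp1 (B : comPzRingType) (HB : boolean_ring B) (a a' : B) :
  ble a a' -> (1 + a') * (1 + a) = 1 + a'.
Proof.
rewrite /ble => Ha.
rewrite mulrDl mul1r mulrDr mulr1 (mulrC a' a) Ha.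
by rewrite [a' + a]addrC addrA -[1 + a + a]addrA addxx // addr0.
Qed.

Lemma ble_join_mono (B : comPzRingType) (HB : boolean_ring B) (s a b a' b' : B) :
  ble s (bjoin a b) -> ble a a' -> ble b b' -> ble s (bjoin a' b').
Proof.
move=> /(ble_iff HB) H /(comp1 HB) Ha /(comp1 HB) Hb; apply/(ble_iff HB).
by rewrite -Ha -Hb (mulrC (1 + a')) (mulrC (1 + b')) !mulrA (mulrAC (s * (1 + a))) H !mul0r.
Qed.

Lemma L1 (B : comPzRingType) (c e s t : B) :
  c * e = 0 -> ble s (bjoin e t) -> c * s = c * s * t.
Proof.
rewrite /ble /bjoin => Hc Hs.
rewrite -{1}Hs !mulrDr !mulrA (mulrAC c s e) Hc !mul0r add0r.
by rewrite addr0.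
Qed.

Lemma L1' (B : comPzRingType) (c e s t : B) :
  c * e = 0 -> ble s (bjoin t e) -> c * s = c * s * t.
Proof.
move=> Hc Hs; apply: (L1 Hc); move: Hs; by rewrite /ble /bjoin (addrC t e) (mulrC t e).
Qed.

Lemma ctrans (B : comPzRingType) (c D E F : B) :
  c * D = c * D * E -> c * E = c * E * F -> c * D = c * D * F.
Proof.
move=> H1 H2; transitivity (D * (c * E * F)).
  by rewrite -H2 mulrA (mulrC D c) -H1.
by rewrite !mulrA (mulrC D c) -H1.
Qed.
Definition Prel (X Y : Type) (o : X) (n : nat) (xs : 'I_n -> X) (o' : Y)
  (f : 'I_n -> Y) (p : X) (w : Y) : Prop :=
  (p = o /\ w = o') \/ (exists i, p = xs i /\ w = f i).

Definition compat (B : comPzRingType) (X Y : Type) (d : X -> X -> B) (d' : Y -> Y -> B)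
  (o : X) (n : nat) (xs : 'I_n -> X) (o' : Y) (f : 'I_n -> Y) (x : X) (u : Y) : Prop :=
  exists m (ys : 'I_m -> X) (ws : 'I_m -> Y) (a : 'I_m -> B),
  [/\ forall k, Prel o xs o' f (ys k) (ws k), \sum_(k < m) a k = 1,
      convex_comb d ys a x & convex_comb d' ws a u].

Lemma dxx (B : comPzRingType) (X : Type) (d : X -> X -> B) (HX : bmetric d) x :
  d x x = 0.
Proof. by case: HX => H _ _; apply/H. Qed.

Lemma dsym (B : comPzRingType) (X : Type) (d : X -> X -> B) (HX : bmetric d) x y :
  d x y = d y x.
Proof. by case: HX. Qed.

Lemma dtri (B : comPzRingType) (X : Type) (d : X -> X -> B) (HX : bmetric d) x y z :
  ble (d x z) (bjoin (d x y) (d y z)).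
Proof. by case: HX. Qed.

Lemma ble0 (B : comPzRingType) (z : B) : ble 0 z.
Proof. by rewrite /ble mul0r. Qed.

Lemma Fcontr (B : comPzRingType) (HB : boolean_ring B)
  (X : Type) (d : X -> X -> B) (HX : bmetric d) (o : X)
  (n : nat) (xs : 'I_n -> X) (HR : referential d o xs)
  (Y : Type) (d' : Y -> Y -> B) (HY : bmetric d') (o' : Y)
  (f : 'I_n -> Y) (Hf : forall i, ble (d' o' (f i)) (d o (xs i))) p q w w' :
  Prel o xs o' f p w -> Prel o xs o' f q w' -> ble (d' w w') (d p q).
Proof.
case: HR => Hinj Hne Horth _.
case=> [[-> ->]|[i [-> ->]]] [[-> ->]|[j [-> ->]]].
- by rewrite dxx //; apply: ble0.
- exact: Hf.
- by rewrite dsym // (dsym HX); apply: Hf.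
- case: (eqVneq i j) => [->|ij]; first by rewrite dxx //; apply: ble0.
  rewrite (Horth _ _ ij) /bnorm.
  apply: (ble_join_mono HB (dtri HY (f i) o' (f j))) => //.
  by rewrite dsym //; apply: Hf.
Qed.

Lemma sum_expand (B : comPzRingType) m p (a : 'I_m -> B) (b : 'I_p -> B) (z : B) :
  \sum_(k < m) a k = 1 -> \sum_(l < p) b l = 1 ->
  z = \sum_(k < m) \sum_(l < p) a k * b l * z.
Proof.
move=> Ha Hb; rewrite -{1}[z]mul1r -{1}Ha mulr_suml; apply: eq_bigr => k _.
have -> : a k * z = a k * ((\sum_(l < p) b l) * z) by rewrite Hb mul1r.
by rewrite mulr_suml mulr_sumr; apply: eq_bigr => l _; rewrite mulrA.
Qed.

Lemma contr_compat (B : comPzRingType) (HB : boolean_ring B)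
  (X : Type) (d : X -> X -> B) (HX : bmetric d) (o : X)
  (n : nat) (xs : 'I_n -> X) (HR : referential d o xs)
  (Y : Type) (d' : Y -> Y -> B) (HY : bmetric d') (o' : Y)
  (f : 'I_n -> Y) (Hf : forall i, ble (d' o' (f i)) (d o (xs i))) x y u v :
  compat d d' o xs o' f x u -> compat d d' o xs o' f y v -> ble (d' u v) (d x y).
Proof.
move=> [m [ys [ws [a [HP Ha Hx Hu]]]]] [p [zs [ws' [b [HP' Hb Hy Hv]]]]].
have key : forall k l, a k * b l * d' u v = a k * b l * d' u v * d x y.
  move=> k l; set c := a k * b l.
  have c0 : forall e, a k * e = 0 -> c * e = 0.
    by move=> e He; rewrite /c mulrAC He mul0r.
  have c0' : forall e, b l * e = 0 -> c * e = 0.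
    by move=> e He; rewrite /c -mulrA He mulr0.
  apply: (ctrans (E := d' (ws k) v)).
    apply: (L1 (c0 _ (Hu k))); exact: dtri.
  apply: (ctrans (E := d' (ws k) (ws' l))).
    apply: (L1' (e := d' (ws' l) v)); first by rewrite (dsym HY); apply: c0' (Hv l).
    exact: dtri.
  apply: (ctrans (E := d (ys k) (zs l))).
    have := Fcontr HB HX HR HY Hf (HP k) (HP' l); rewrite /ble => H.
    by rewrite -mulrA H.
  apply: (ctrans (E := d x (zs l))).
    apply: (L1 (e := d (ys k) x)); first by rewrite (dsym HX); apply: c0 (Hx k).
    exact: dtri.
  apply: (L1' (e := d y (zs l))); first by apply: c0' (Hy l).
  exact: dtri.
have E := sum_expand (d' u v) Ha Hb.
rewrite /ble {2}E; rewrite {1}E mulr_suml.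
by apply: eq_bigr => k _; rewrite mulr_suml; apply: eq_bigr => l _; rewrite -key.
Qed.
Lemma compat1 (B : comPzRingType) (X : Type) (d : X -> X -> B) (HX : bmetric d) (o : X)
  (n : nat) (xs : 'I_n -> X) (Y : Type) (d' : Y -> Y -> B) (HY : bmetric d') (o' : Y)
  (f : 'I_n -> Y) p w :
  Prel o xs o' f p w -> compat d d' o xs o' f p w.
Proof.
move=> H; exists 1%N, (fun _ => p), (fun _ => w), (fun _ => 1); split => //.
- by rewrite big_ord1.
- by move=> k; rewrite dxx // mulr0.
- by move=> k; rewrite dxx // mulr0.
Qed.

Lemma compat_exists (B : comPzRingType)
  (X : Type) (d : X -> X -> B) (HX : bmetric d) (o : X)
  (n : nat) (xs : 'I_n -> X) (HR : referential d o xs)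
  (Y : Type) (d' : Y -> Y -> B) (HY : bmetric d') (HYc : bconvex d') (o' : Y)
  (f : 'I_n -> Y) x :
  exists u, [/\ compat d d' o xs o' f x u, (x = o -> u = o') &
              (forall i, x = xs i -> u = f i)].
Proof.
case: (HR) => Hinj Hne _ Hrep.
case: (classic (x = o)) => [->|xo].
  exists o'; split => //; first by apply: compat1 => //; left.
  by move=> i E; case: (Hne i); rewrite E.
case: (classic (exists i, x = xs i)) => [[i ->]|nx].
  exists (f i); split => //; first by apply: compat1 => //; right; exists i.
    by move=> E; case: (Hne i).
  by move=> j /Hinj ->.
have [m [ys [a [Hys Ha Hx]]]] := Hrep x.
have Hw : forall k, exists w, Prel o xs o' f (ys k) w.
  move=> k; case: (Hys k) => [E|[i E]]; first by exists o'; left.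
  by exists (f i); right; exists i.
pose ws k := proj1_sig (constructive_indefinite_description _ (Hw k)).
have HP : forall k, Prel o xs o' f (ys k) (ws k).
  by move=> k; rewrite /ws; case: constructive_indefinite_description.
have [u Hu] := HYc m ws a Ha.
exists u; split => //.
  exists m, ys, ws, a; split => //; by case: Ha.
by move=> i E; case: nx; exists i.
Qed.

Theorem mainTheorem10 (B : comPzRingType) (HB : boolean_ring B)
  (X : Type) (d : X -> X -> B) (HX : bmetric d) (HXc : bconvex d) (o : X)
  (n : nat) (xs : 'I_n -> X) (HR : referential d o xs)
  (Y : Type) (d' : Y -> Y -> B) (HY : bmetric d') (HYc : bconvex d') (o' : Y)
  (f : 'I_n -> Y) :
  ((exists fh : X -> Y,
      [/\ contractive d d' fh, fh o = o' & forall i, fh (xs i) = f i])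
   <-> (forall i, ble (d' o' (f i)) (d o (xs i))))
  /\ (forall g h : X -> Y,
      [/\ contractive d d' g, g o = o' & forall i, g (xs i) = f i] ->
      [/\ contractive d d' h, h o = o' & forall i, h (xs i) = f i] ->
      forall x, g x = h x).
Proof.
split.
  split.
    move=> [fh [Hc H0 Hi]] i; rewrite -H0 -Hi; exact: Hc.
  move=> Hf.
  pose fh x := proj1_sig (constructive_indefinite_description _
                 (compat_exists HX HR HY HYc o' f x)).
  have Hfh : forall x, [/\ compat d d' o xs o' f x (fh x), (x = o -> fh x = o') &
              (forall i, x = xs i -> fh x = f i)].
    by move=> x; rewrite /fh; case: constructive_indefinite_description.
  exists fh; split.
  - move=> x y; case: (Hfh x) => Hx _ _; case: (Hfh y) => Hy _ _.
    exact: (contr_compat HB HX HR HY Hf Hx Hy).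
  - by case: (Hfh o) => _ -> .
  - by move=> i; case: (Hfh (xs i)) => _ _ H; exact: H i erefl.
move=> g h [Hg Hg0 Hgi] [Hh Hh0 Hhi] x.
case: (HR) => _ _ _ Hrep.
have [m [ys [a [Hys [_ Ha] Hx]]]] := Hrep x.
have Hk : forall k, a k * d' (g x) (h x) = 0.
  move=> k.
  have Egh : g (ys k) = h (ys k).
    by case: (Hys k) => [->|[i ->]]; [rewrite Hg0 Hh0 | rewrite Hgi Hhi].
  have e1 : a k * d' (g x) (g (ys k)) = 0.
    by rewrite -(Hg x (ys k)) mulrA mulrAC Hx mul0r.
  have e2 : a k * d' (h (ys k)) (h x) = 0.
    by rewrite -(Hh (ys k) x) mulrA mulrAC (dsym HX) Hx mul0r.
  have H1 := L1 e1 (dtri HY (g x) (g (ys k)) (h x)).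
  by rewrite H1 Egh mulrAC e2 mul0r.
case: HY => HY0 _ _; apply/HY0.
by rewrite -[d' _ _]mul1r -Ha mulr_suml big1.
Qed.
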